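(* Let $B$ be a Batanin tree and $n\in\mathbb N$. Then the cosource and cotarget $s^B_n,t^B_n\colon\mathrm{Pos}(\partial_nB)\to\mathrm{Pos}(B)$ each induce bijections between the sets of positions of dimension $k$ for every $k<n$. Moreover, they are injective on positions of dimension $n$, and for every position $p\in\mathrm{Pos}_n(B)$ there exists a unique position $q\in\mathrm{Pos}_n(\partial_nB)$ such that $s^B_n(q)$, $t^B_n(q)$ and $p$ are parallel.
   Context: Batanin trees are generated inductively: for every finite list $B_1,\dots,B_n$ ($n\ge0$) of Batanin trees there is a tree $[B_1,\dots,B_n]$. The suspension $\Sigma Y$ of a globular set $Y$ has $0$-cells $v_-,v_+$ and $(\Sigma Y)_{n+1}=Y_n$, every $1$-cell having source $v_-$ and target $v_+$. The globular set of positions is $\mathrm{Pos}([B_1,\dots,B_n])=\Sigma\mathrm{Pos}(B_1)\vee\cdots\vee\Sigma\mathrm{Pos}(B_n)$, the iterated wedge sum gluing $v_+$ of each summand to $v_-$ of the next (a single $0$-cell when $n=0$); $\mathrm{Pos}_n(B)$ denotes its set of $n$-cells. Two cells are parallel if they have the same source and target (all $0$-cells are parallel). Boundary: $\partial_0B=[\,]$, $\partial_{k+1}[B_1,\dots,B_n]=[\partial_kB_1,\dots,\partial_kB_n]$. Cosource/cotarget $s^B_k,t^B_k\colon\mathrm{Pos}(\partial_kB)\to\mathrm{Pos}(B)$ for $B=[B_1,\dots,B_n]$: $s^B_0$ picks $\mathrm{inc}_1(v_-)$, $t^B_0$ picks $\mathrm{inc}_n(v_+)$, $s^B_{k+1}=\bigvee_i\Sigma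 s^{B_i}_k$, $t^B_{k+1}=\bigvee_i\Sigma t^{B_i}_k$, where $\mathrm{inc}_i$ is the inclusion of the $i$-th wedge summand. *)

(* Defs.v *)
From mathcomp Require Import all_boot.
Set Implicit Arguments. Unset Strict Implicit. Unset Printing Implicit Defensive.

(** Batanin trees: [Node [:: B_1; ...; B_n]] is [B_1,...,B_n]. *)
Inductive tree : Type := Node of seq tree.

Definition leaf : tree := Node [::].

Definition children (B : tree) : seq tree := let: Node l := B in l.

(** In Pos([B_1,...,B_n]) = ΣPos(B_1) ∨ ... ∨ ΣPos(B_n):
    - the 0-cells are the n+1 wedge points [Pt 0], ..., [Pt n]
      ([Pt (i-1)] = v_- of the i-th summand = v_+ of the (i-1)-th summand);
    - a (k+1)-cell is [Up i p] with i < n and p a k-cell of Pos(B_(i+1))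
      (0-indexed child i), i.e. the cell p of the i-th suspended summand. *)
Inductive pos : Type := Pt of nat | Up of nat & pos.

Fixpoint dim (p : pos) : nat :=
  match p with Pt _ => 0 | Up _ q => (dim q).+1 end.

Fixpoint valid (B : tree) (p : pos) : bool :=
  match p with
  | Pt j => j <= size (children B)
  | Up i q => (i < size (children B)) && valid (nth leaf (children B) i) q
  end.

Definition Pos_n (B : tree) (n : nat) (p : pos) : Prop := valid B p /\ dim p = n.

(** Source and target of a cell of positive dimension (in the suspension every
    1-cell of the i-th summand goes from v_- = Pt i to v_+ = Pt (i+1)).
    The value on 0-cells is irrelevant. *)
Fixpoint psrc (p : pos) : pos :=
  match p with
  | Pt j => Pt j
  | Up i (Pt _) => Pt i
  | Up i q => Up i (psrc q)
  end.

Fixpoint ptgt (p : pos) : pos :=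
  match p with
  | Pt j => Pt j
  | Up i (Pt _) => Pt i.+1
  | Up i q => Up i (ptgt q)
  end.

Definition parallel (p q : pos) : Prop :=
  dim p = dim q /\ (dim p = 0 \/ (psrc p = psrc q /\ ptgt p = ptgt q)).

Fixpoint bdry (k : nat) (B : tree) : tree :=
  match k with
  | 0 => leaf
  | k'.+1 => Node (map (bdry k') (children B))
  end.

(** Cosource ([b = true]) / cotarget ([b = false]) s^B_k, t^B_k :
    Pos(∂_k B) -> Pos(B).  s_0 picks inc_1(v_-) = Pt 0, t_0 picks
    inc_n(v_+) = Pt n; s_(k+1) = ∨_i Σ s^(B_i)_k (identity on wedge points,
    and on the i-th summand the suspension of s^(B_i)_k). *)
Fixpoint coface (b : bool) (k : nat) (B : tree) (p : pos) : pos :=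
  match k with
  | 0 => if b then Pt 0 else Pt (size (children B))
  | k'.+1 =>
      match p with
      | Pt j => Pt j
      | Up i q => Up i (coface b k' (nth leaf (children B) i) q)
      end
  end.

Definition cosource (k : nat) (B : tree) : pos -> pos := coface true k B.
Definition cotarget (k : nat) (B : tree) : pos -> pos := coface false k B.

(* Main.v *)
Require Import Defs.
From mathcomp Require Import all_boot.
Set Implicit Arguments. Unset Strict Implicit.

Lemma bdry_leaf n : bdry n leaf = leaf.
Proof. by case: n. Qed.

Lemma nth_bdry n l i : nth leaf (map (bdry n) l) i = bdry n (nth leaf l i).
Proof.
elim: l i => [|x l IHl] [|i] //=; by rewrite bdry_leaf.
Qed.

Lemma psrcU i a : 0 < dim a -> psrc (Up i a) = Up i (psrc a).
Proof. by case: a. Qed.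
Lemma ptgtU i a : 0 < dim a -> ptgt (Up i a) = Up i (ptgt a).
Proof. by case: a. Qed.

Lemma parallel_Up i j a b : dim a = dim b ->
  (parallel (Up i a) (Up j b) <-> i = j /\ parallel a b).
Proof.
rewrite /parallel => Hd.
case: a Hd => [x|x a] Hd.
- case: b Hd => [y|//] _ /=; split.
  + move=> [_ [H|[[->] _]]]; first by [].
    by split=> //; split=> //; left.
  + by move=> [-> _]; split=> //; right.
- have Pa : 0 < dim (Up x a) by [].
  have Pb : 0 < dim b by rewrite -Hd.
  rewrite (psrcU i Pa) (ptgtU i Pa) (psrcU j Pb) (ptgtU j Pb) /= -Hd; split.
  + move=> [_ [H|[[-> E1] [E2]]]]; first by [].
    by split=> //; split=> //; right; split.
  + move=> [-> [_ [H|[E1 E2]]]]; first by [].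
    by split=> //; right; rewrite E1 E2.
Qed.

Lemma coface_ok b n B q : valid (bdry n B) q -> dim q <= n ->
  valid B (coface b n B q) /\ dim (coface b n B q) = dim q.
Proof.
elim: n B q => [|n IH] [l] q /=.
- case: q => [j|i q] /=; last by rewrite ltn0.
  by move=> _ _; case: b; split=> //=; rewrite leqnn.
- case: q => [j|i q] /=; first by rewrite size_map.
  rewrite size_map nth_bdry => /andP[Hi Hv] Hd.
  have [H1 H2] := IH (nth leaf l i) q Hv Hd.
  by rewrite Hi H1 H2.
Qed.

Lemma coface_inj b n B q1 q2 : valid (bdry n B) q1 -> valid (bdry n B) q2 ->
  dim q1 <= n -> dim q2 <= n ->
  coface b n B q1 = coface b n B q2 -> q1 = q2.
Proof.
elim: n B q1 q2 => [|n IH] [l] q1 q2 /=.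
- by case: q1 => [[]|//]; case: q2 => [[]|//].
- case: q1 => [j1|i1 q1]; case: q2 => [j2|i2 q2] //=;
    rewrite ?size_map ?nth_bdry.
  + move=> /andP[_ H1] /andP[_ H2] D1 D2 [E1 E2]; subst i2.
    by rewrite (IH _ _ _ H1 H2 D1 D2 E2).
Qed.

Lemma coface_surj b n B p : valid B p -> dim p < n ->
  exists q, valid (bdry n B) q /\ dim q = dim p /\ coface b n B q = p.
Proof.
elim: n B p => [|n IH] [l] p //=.
case: p => [j|i p] /=.
- by move=> Hj _; exists (Pt j); rewrite /= size_map Hj.
- move=> /andP[Hi Hv] Hd.
  have [q [Hq [Dq Eq]]] := IH (nth leaf l i) p Hv Hd.
  exists (Up i q); by rewrite /= size_map nth_bdry Hi Hq Dq Eq.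
Qed.

Lemma par_exists n B p : valid B p -> dim p = n ->
  exists q, valid (bdry n B) q /\ dim q = n /\
    parallel (cosource n B q) (cotarget n B q) /\
    parallel (cosource n B q) p /\ parallel (cotarget n B q) p.
Proof.
rewrite /cosource /cotarget.
elim: n B p => [|n IH] [l] p /=.
- move=> _ Hd; exists (Pt 0); rewrite /parallel /= Hd; do !split; by left.
- case: p => [//|i p] /= /andP[Hi Hv] [Hd].
  have [q [Hq [Dq [P1 [P2 P3]]]]] := IH (nth leaf l i) p Hv Hd.
  exists (Up i q); split; first by rewrite /= size_map nth_bdry Hi Hq.
  split; first by rewrite /= Dq.
  split; [|split].
  + apply/parallel_Up; last by split.
    by case: P1.
  + apply/parallel_Up; last by split.
    by case: P2.
  + apply/parallel_Up; last by split.
    by case: P3.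
Qed.

Lemma par_unique n B p q1 q2 :
  valid (bdry n B) q1 -> dim q1 = n -> valid (bdry n B) q2 -> dim q2 = n ->
  parallel (cosource n B q1) p -> parallel (cosource n B q2) p -> q1 = q2.
Proof.
rewrite /cosource.
elim: n B p q1 q2 => [|n IH] [l] p q1 q2 /=.
- by case: q1 => [[]|//]; case: q2 => [[]|//].
- case: q1 => [//|i1 q1]; case: q2 => [//|i2 q2] /=.
  rewrite size_map !nth_bdry => /andP[_ H1] [D1] /andP[_ H2] [D2].
  case: p => [j|j p].
  + by move=> [].
  + move=> P1 P2.
    have Ed1 : dim (coface true n (nth leaf l i1) q1) = dim p.
      by case: P1 => /= [[]].
    have Ed2 : dim (coface true n (nth leaf l i2) q2) = dim p.
      by case: P2 => /= [[]].
    move/(parallel_Up _ _ Ed1): P1 => [E1 P1].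
    move/(parallel_Up _ _ Ed2): P2 => [E2 P2].
    subst i1 i2.
    by rewrite (IH _ _ _ _ H1 D1 H2 D2 P1 P2).
Qed.

Unset Implicit Arguments.

Theorem lemma4p1 (B : tree) (n : nat) :
  (forall f : pos -> pos, (f = cosource n B \/ f = cotarget n B) ->
     (* bijection Pos_k(∂_n B) -> Pos_k(B) for every k < n *)
     (forall k : nat, k < n ->
        (forall q, Pos_n (bdry n B) k q -> Pos_n B k (f q)) /\
        (forall q1 q2, Pos_n (bdry n B) k q1 -> Pos_n (bdry n B) k q2 ->
           f q1 = f q2 -> q1 = q2) /\
        (forall p, Pos_n B k p -> exists q, Pos_n (bdry n B) k q /\ f q = p)) /\
     (* injective on positions of dimension n *)
     ((forall q, Pos_n (bdry n B) n q -> Pos_n B n (f q)) /\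
      (forall q1 q2, Pos_n (bdry n B) n q1 -> Pos_n (bdry n B) n q2 ->
         f q1 = f q2 -> q1 = q2))) /\
  (forall p, Pos_n B n p ->
     exists! q, Pos_n (bdry n B) n q /\
       parallel (cosource n B q) (cotarget n B q) /\
       parallel (cosource n B q) p /\
       parallel (cotarget n B q) p).
Proof.
split.
- move=> f Hf.
  have [b ->] : exists b, f = coface b n B.
    by case: Hf => ->; [exists true | exists false].
  rewrite /Pos_n; split.
  + move=> k Hk; split; [|split].
    * move=> q [Hq Dq]; have Hd : dim q <= n by rewrite Dq ltnW.
      have [H1 H2] := coface_ok b Hq Hd.
      by rewrite H2.
    * move=> q1 q2 [H1 D1] [H2 D2]; apply: coface_inj => //;
        [rewrite D1 | rewrite D2]; exact: ltnW.
    * move=> p [Hp Dp]; have Hd : dim p < n by rewrite Dp.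
      have [q [Hq [Dq Eq]]] := coface_surj b Hp Hd.
      by exists q; rewrite Dq Dp.
  + split.
    * move=> q [Hq Dq]; have [H1 H2] := coface_ok b Hq (eq_leq Dq).
      by rewrite H2.
    * move=> q1 q2 [H1 D1] [H2 D2]; apply: coface_inj => //;
        [by rewrite D1 | by rewrite D2].
- move=> p [Hp Dp].
  have [q [Hq [Dq HP]]] := par_exists Hp Dp.
  exists q; split; first by [].
  move=> q' [[Hq' Dq'] [_ [P' _]]].
  exact: (par_unique Hq Dq Hq' Dq' (proj1 (proj2 HP)) P').
Qed.
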